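(* Let $\Phi\in\Gamma_0(\mathbb{E})$ be Legendre and let $C\subset \operatorname{int}(\operatorname{dom}\Phi)$ be compact. Then there exist $r>0$ and $\delta<\infty$ such that $$D_\Phi(x,y)\ \ge\ r\|x\|-\delta\qquad\text{for every } x\in\operatorname{dom}\Phi \text{ and every } y\in C.$$
   Context: $\mathbb{E}$ is a finite-dimensional Euclidean space with inner product $\langle\cdot,\cdot\rangle$ and norm $\|\cdot\|$; $\Gamma_0(\mathbb{E})$ is the set of proper, lower semicontinuous, convex functions $\mathbb{E}\to\mathbb{R}\cup\{+\infty\}$. A function $\Phi\in\Gamma_0(\mathbb{E})$ is Legendre if it is essentially smooth ($\operatorname{int}\operatorname{dom}\Phi\neq\emptyset$, $\Phi$ is differentiable on $\operatorname{int}\operatorname{dom}\Phi$, and $\|\nabla\Phi(z^\nu)\|\to\infty$ whenever $\operatorname{int}\operatorname{dom}\Phi\ni z^\nu\to z\in\operatorname{bdry}\operatorname{dom}\Phi$) and essentially strictly convex ($\Phi$ is strictly convex on every convex subset of $\operatorname{dom}\partial\Phi$). The Bregman distance generated by a Legendre $\Phi$ is $D_\Phi(z_1,z_2)=\Phi(z_1)-\Phi(z_2)-\langle\nabla\Phi(z_2),z_1-z_2\rangle$ if $z_1\in\operatorname{dom}\Phi$ and $z_2\in\operatorname{int}\operatorname{dom}\Phi$, and $D_\Phi(z_1,z_2)=+\infty$ otherwise. *)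

(* Defs.v *)
From HB Require Import structures.
From mathcomp Require Import all_boot all_order all_algebra.
From mathcomp Require Import all_classical all_reals all_analysis.
Set Implicit Arguments. Unset Strict Implicit. Unset Printing Implicit Defensive.
Import Order.TTheory GRing.Theory Num.Theory.
Import numFieldNormedType.Exports.
Local Open Scope classical_set_scope.
Local Open Scope ring_scope.

(* The Euclidean space E is modelled as 'rV[R]_n (R : realType) with the
   standard inner product; its topology (product topology) coincides with the
   Euclidean one. Functions E -> R u {+oo} are modelled as E -> \bar R. *)

Definition inner (R : realType) (n : nat) (u v : 'rV[R]_n) : R :=
  \sum_(i < n) u 0 i * v 0 i.

Definition enorm (R : realType) (n : nat) (u : 'rV[R]_n) : R :=
  Num.sqrt (inner u u).

Definition edom (R : realType) (n : nat) (Phi : 'rV[R]_n -> \bar R) :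
  set 'rV[R]_n := [set x | (Phi x < +oo)%E].

Definition proper_fun (R : realType) (n : nat) (Phi : 'rV[R]_n -> \bar R) :=
  (forall x, Phi x != -oo%E) /\ (exists x, Phi x \is a fin_num).

Definition lsc_fun (R : realType) (n : nat) (Phi : 'rV[R]_n -> \bar R) :=
  forall (x : 'rV[R]_n) (a : R), (a%:E < Phi x)%E ->
    \forall y \near x, (a%:E < Phi y)%E.

Definition convex_fun (R : realType) (n : nat) (Phi : 'rV[R]_n -> \bar R) :=
  forall (x y : 'rV[R]_n) (t : R), 0 < t < 1 ->
    (Phi (t *: x + (1 - t) *: y)%R <= t%:E * Phi x + (1 - t)%:E * Phi y)%E.

Definition Gamma0 (R : realType) (n : nat) (Phi : 'rV[R]_n -> \bar R) :=
  [/\ proper_fun Phi, lsc_fun Phi & convex_fun Phi].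

(* real-valued version (meaningful on dom Phi) *)
Definition rfun (R : realType) (n : nat) (Phi : 'rV[R]_n -> \bar R) :
  'rV[R]_n -> R := fun x => fine (Phi x).

Definition grad (R : realType) (n : nat) (Phi : 'rV[R]_n -> \bar R)
  (z : 'rV[R]_n) : 'rV[R]_n :=
  \row_(i < n) ('D_(delta_mx 0 i) (rfun Phi) z).

Definition bdry (R : realType) (n : nat) (S : set 'rV[R]_n) : set 'rV[R]_n :=
  closure S `\` interior S.

Definition essentially_smooth (R : realType) (n : nat)
  (Phi : 'rV[R]_n -> \bar R) :=
  [/\ interior (edom Phi) !=set0,
      (forall z, interior (edom Phi) z -> differentiable (rfun Phi) z) &
      (forall (zs : nat -> 'rV[R]_n) (z : 'rV[R]_n),
         (forall k, interior (edom Phi) (zs k)) ->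
         zs @ \oo --> z -> bdry (edom Phi) z ->
         (fun k => enorm (grad Phi (zs k))) @ \oo --> +oo)].

Definition dom_subdiff (R : realType) (n : nat) (Phi : 'rV[R]_n -> \bar R) :
  set 'rV[R]_n :=
  [set x | Phi x \is a fin_num /\
     exists g : 'rV[R]_n, forall y,
       ((fine (Phi x) + inner g (y - x))%:E <= Phi y)%E].

Definition convex_subset (R : realType) (n : nat) (S : set 'rV[R]_n) :=
  forall x y (t : R), S x -> S y -> 0 <= t <= 1 -> S (t *: x + (1 - t) *: y).

Definition strictly_convex_on (R : realType) (n : nat)
  (Phi : 'rV[R]_n -> \bar R) (S : set 'rV[R]_n) :=
  forall x y (t : R), S x -> S y -> x != y -> 0 < t < 1 ->
    (Phi (t *: x + (1 - t) *: y)%R < t%:E * Phi x + (1 - t)%:E * Phi y)%E.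

Definition essentially_strictly_convex (R : realType) (n : nat)
  (Phi : 'rV[R]_n -> \bar R) :=
  forall S, convex_subset S -> S `<=` dom_subdiff Phi -> strictly_convex_on Phi S.

Definition Legendre (R : realType) (n : nat) (Phi : 'rV[R]_n -> \bar R) :=
  [/\ Gamma0 Phi, essentially_smooth Phi & essentially_strictly_convex Phi].

Definition bregman (R : realType) (n : nat) (Phi : 'rV[R]_n -> \bar R)
  (x y : 'rV[R]_n) : \bar R :=
  if `[< edom Phi x /\ interior (edom Phi) y >] then
    (rfun Phi x - rfun Phi y - inner (grad Phi y) (x - y))%:E
  else +oo%E.

(* Main.v *)
Require Import Defs.
From HB Require Import structures.
From mathcomp Require Import all_boot all_order all_algebra.
From mathcomp Require Import all_classical all_reals all_analysis.
From mathcomp Require Import ring lra.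
Import Order.TTheory GRing.Theory Num.Theory.
Import numFieldNormedType.Exports.
Local Open Scope classical_set_scope.
Local Open Scope ring_scope.

Section S.
Variables (R : realType) (n : nat).
Implicit Types (Phi : 'rV[R]_n -> \bar R).

Lemma dq_right (f : 'rV[R]_n -> R) (y v : 'rV[R]_n) :
  derivable f y v ->
  (fun h : R => h^-1 *: ((f \o shift y) (h *: v) - f y)) @ 0^'+ --> 'D_v f y.
Proof.
move=> cvfx.
move=> A /cvfx /nbhs_ballP [_ /posnumP[e] xe_A].
by exists e%:num => //= z ze /gt_eqF/negbT/xe_A; exact.
Qed.

Lemma fin_of Phi x : proper_fun Phi -> edom Phi x -> Phi x = (rfun Phi x)%:E.
Proof.
move=> [h1 _] hx; rewrite /rfun fineK //.
by rewrite fin_numE h1 /= lt_eqF.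
Qed.

Lemma conv_fin Phi x y t : proper_fun Phi -> convex_fun Phi -> edom Phi x -> edom Phi y ->
  0 < t < 1 -> edom Phi (t *: x + (1 - t) *: y) /\
  rfun Phi (t *: x + (1 - t) *: y) <= t * rfun Phi x + (1 - t) * rfun Phi y.
Proof.
move=> pP cP hx hy ht.
have := cP x y t ht; rewrite (@fin_of Phi _ pP hx) (@fin_of Phi _ pP hy) -!EFinM -EFinD => H.
have hz : edom Phi (t *: x + (1 - t) *: y) by rewrite /edom /=; apply: le_lt_trans H _; exact: ltry.
split => //; move: H; rewrite (@fin_of Phi _ pP hz) lee_fin; exact.
Qed.

Lemma dq_le Phi y v s : Gamma0 Phi -> derivable (rfun Phi) y v ->
  edom Phi y -> edom Phi (y + s *: v) -> 0 < s ->
  'D_v (rfun Phi) y <= (rfun Phi (y + s *: v) - rfun Phi y) / s.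
Proof.
move=> [pP _ cP] dv hy hs s0.
have := @cvgr_to_le R (at_right (0:R)) _ R _ _ ((rfun Phi (y + s *: v) - rfun Phi y) / s) (dq_right (rfun Phi) y v dv).
move=> HH; apply: HH.
near=> h.
have h0 : 0 < h by near: h; exact: nbhs_right_gt.
have hs' : h < s by near: h; exact: nbhs_right_lt.
have ht : 0 < h / s < 1 by rewrite divr_gt0 //= ltr_pdivrMr // mul1r.
have [_ H] := @conv_fin Phi _ _ _ pP cP hs hy ht.
have E : h / s *: (y + s *: v) + (1 - h / s) *: y = h *: v + y.
  rewrite scalerDr scalerA mulfVK ?gt_eqF // scalerBl scale1r; by rewrite addrC addrA subrK addrC.
rewrite E in H.
rewrite /= /shift /=.
rewrite -ler_pdivlMl ?invr_gt0 // invrK /= mulrA.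
rewrite lerBlDr; apply: le_trans H _.
by rewrite le_eqVlt; apply/orP; left; apply/eqP; ring.
Unshelve. all: by end_near.
Qed.

Lemma grad_inner Phi y v : differentiable (rfun Phi) y ->
  inner (grad Phi y) v = 'D_v (rfun Phi) y.
Proof.
move=> dy; rewrite deriveE // [in RHS](row_sum_delta v) linear_sum /inner.
apply: eq_bigr => i _; rewrite linearZ /= mxE deriveE // mulrC.
by [].
Qed.

Lemma subgrad Phi y x : Gamma0 Phi -> interior (edom Phi) y ->
  differentiable (rfun Phi) y ->
  ((rfun Phi y + inner (grad Phi y) (x - y))%:E <= Phi x)%E.
Proof.
move=> G yU dy; have [pP _ _] := G.
have hy := interior_subset yU.
have [hx|hx] := pselect (edom Phi x); last first.
  have -> : Phi x = +oo%E by apply/eqP; rewrite eq_le leey /= leNgt; apply/negP.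
  exact: leey.
rewrite (@fin_of Phi _ pP hx) lee_fin grad_inner //.
have := @dq_le Phi y (x - y) 1 G (diff_derivable dy) hy.
rewrite scale1r addrC subrK divr1 => /(_ hx ltr01); lra.
Qed.

Lemma int_subdiff Phi y : Gamma0 Phi -> interior (edom Phi) y ->
  differentiable (rfun Phi) y -> dom_subdiff Phi y.
Proof.
move=> G yU dy; have [pP _ _] := G; split.
  by rewrite (@fin_of Phi _ pP (interior_subset yU)).
by exists (grad Phi y) => z; exact: subgrad.
Qed.

Lemma hpos Phi y u e : Legendre Phi -> 0 < e -> u != 0 ->
  (forall s, 0 <= s <= 1 -> interior (edom Phi) (y + (s * e) *: u)) ->
  0 < rfun Phi (y + e *: u) - 2 * rfun Phi (y + (e / 2) *: u) + rfun Phi y.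
Proof.
move=> [G [_ dP _] sP] e0 u0 Hs.
have [pP _ _] := G.
pose S := [set z | exists2 s : R, 0 <= s <= 1 & z = y + (s * e) *: u].
have cS : convex_subset S.
  move=> x1 x2 t [s1 hs1 ->] [s2 hs2 ->] ht.
  exists (t * s1 + (1 - t) * s2).
    apply/andP; split.
      by apply: addr_ge0; apply: mulr_ge0; lra.
    by nra.
  rewrite !scalerDr !scalerA addrACA -!scalerDl.
  by congr (_ + _); [rewrite addrC subrK scale1r|congr (_ *: _); ring].
have SD : S `<=` dom_subdiff Phi.
  by move=> z [s hs ->]; exact: (@int_subdiff Phi _ G (Hs s hs) (dP _ (Hs s hs))).
have h1 : S (y + e *: u) by exists 1; [lra|rewrite mul1r].
have h0 : S y by exists 0; [lra|rewrite mul0r scale0r addr0].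
have hne : y + e *: u != y.
  apply/negP => /eqP/(congr1 (fun z => z - y)); rewrite addrC addKr subrr.
  by move/eqP; rewrite scaler_eq0 (gt_eqF e0) (negbTE u0).
have ht : 0 < (2^-1 : R) < 1 by apply/andP; split; lra.
have := sP S cS SD _ _ _ h1 h0 hne ht.
have E : 2^-1 *: (y + e *: u) + (1 - 2^-1) *: y = y + (2^-1 * e) *: u.
  rewrite scalerDr scalerA addrAC -scalerDl; congr (_ + _).
  by rewrite -{2}(scale1r y); congr (_ *: _); lra.
rewrite E.
rewrite (@fin_of Phi _ pP (interior_subset (Hs (2^-1) _))); last lra.
have hU1 : interior (edom Phi) (y + e *: u) by have := Hs 1; rewrite mul1r; apply; lra.
have hU0 : interior (edom Phi) y by have := Hs 0; rewrite mul0r scale0r addr0; apply; lra.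
rewrite (@fin_of Phi _ pP (interior_subset hU1)).
rewrite (@fin_of Phi _ pP (interior_subset hU0)).
rewrite -!EFinM -EFinD lte_fin.
rewrite [e / 2]mulrC; lra.
Qed.

Lemma entry_le (x : 'rV[R]_n) i : `|x 0 i| <= `|x|.
Proof.
rewrite [leRHS]/Num.norm /= mx_normrE; apply/bigmax_geP; right => /=.
by exists (0, i).
Qed.

Lemma enorm_le (x : 'rV[R]_n) : enorm x <= n.+1%:R * `|x|.
Proof.
have hx : 0 <= `|x| by [].
rewrite /enorm -[leRHS]ger0_norm; last by apply: mulr_ge0.
rewrite -sqrtr_sqr ler_sqrt; last exact: sqr_ge0.
apply: (@le_trans _ _ (\sum_(i < n) `|x| ^+ 2)).
  apply: ler_sum => i _; rewrite -expr2 -real_normK ?num_real //.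
  by rewrite lerXn2r ?nnegrE // entry_le.
rewrite sumr_const card_ord.
set a := `|x| ^+ 2.
have a0 : 0 <= a by exact: sqr_ge0.
rewrite -(mulr_natr a) exprMn.
have : (n%:R : R) <= n.+1%:R by rewrite ler_nat.
have : (1 : R) <= n.+1%:R by rewrite ler1n.
have : (0:R) <= n%:R by [].
rewrite ?mul1r.
have -> : `|x| ^+ 2 = a by []. nra.
Qed.
End S.

Theorem mainTheorem1 (R : realType) (n : nat) (Phi : 'rV[R]_n -> \bar R)
  (C : set 'rV[R]_n) :
  Legendre Phi -> compact C -> C `<=` interior (edom Phi) ->
  exists r delta : R, 0 < r /\
    forall x y, edom Phi x -> C y ->
      ((r * enorm x - delta)%:E <= bregman Phi x y)%E.
Proof.
move=> L cC CU.
have [G [_ dP _] sP] := L; have [pP _ cP] := G.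
set U := interior (edom Phi).
have [e [e0 He]] : exists e : R, 0 < e /\
    forall y, C y -> forall w, `|w| <= e -> U (y + w).
  have nc := (compact_near_coveringP C).1 cC.
  have H : \forall e \near (0:R)^'+, C `<=` (fun y => forall w, `|w| <= e -> U (y + w)).
    apply: nc => x Cx.
    have /nbhs_ballP[_ /posnumP[d] hd] : nbhs x U.
      by apply: open_nbhs_nbhs; split; [exact: open_interior | exact: CU].
    near=> x' i.
    move=> w hw; apply: hd.
    have hx' : `|x - x'| < d%:num / 2.
      near: x'; apply/nbhs_ballP; exists (d%:num / 2) => //= z.
      by rewrite -ball_normE.
    have hi : i < d%:num / 2 by near: i; apply: nbhs_right_lt.
    rewrite -ball_normE /= opprD addrA.
    apply: (le_lt_trans (ler_normB _ _)); move: hw => /= hw; lra.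
  have [e [He e0]] := filter_ex (filterI H (nbhs_right_gt 0)).
  by exists e.
have [B HB] : exists B : R, forall y, C y -> `|y| <= B.
  have := compact_bounded cC; rewrite /= /bounded_near => /filter_ex [B HB].
  by exists B.
pose h (p : 'rV[R]_n * 'rV[R]_n) := rfun Phi (p.1 + e *: p.2)
  - 2 * rfun Phi (p.1 + (e / 2) *: p.2) + rfun Phi p.1.
have HsU y u : C y -> `|u| = 1 -> forall s, 0 <= s <= 1 -> U (y + (s * e) *: u).
  move=> Cy u1 s hs; apply: He => //.
  rewrite normrZ u1 mulr1 ger0_norm; last by apply: mulr_ge0; lra.
  by rewrite -[leRHS]mul1r ler_wpM2r //; [lra|case/andP: hs].
have [m [m0 Hm]] : exists m, 0 < m /\
    forall y u, C y -> `|u| = 1 -> m <= h (y, u).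
  pose S := [set u : 'rV[R]_n | `|u| = 1].
  have [K0|K0] := pselect ((C `*` S) !=set0); last first.
    exists 1; split => // y u Cy Su; exfalso; apply: K0; by exists (y, u).
  have cK : compact (C `*` S).
    apply: compact_setX => //; apply: bounded_closed_compact.
      rewrite /= /bounded_near; near=> M => u /= ->; apply: ltW; near: M; apply: nbhs_pinfty_gt.
      exact: num_real.
    have -> : S = (fun u : 'rV[R]_n => `|u|) @^-1` [set x : R | x = 1] by [].
    have := proj1 (continuous_closedP (fun u : 'rV[R]_n => `|u|)).
    move=> /(_ (@norm_continuous _ _)); apply; exact: closed_eq.
  have ch : {within C `*` S, continuous h}.
    apply: continuous_in_subspaceT => -[y u] /set_mem [/= Cy Su].
    have fc c : U (y + c *: u) -> {for (y, u), continuous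
        (fun p : 'rV[R]_n * 'rV[R]_n => rfun Phi (p.1 + c *: p.2))}.
      move=> hc.
      apply: (continuous_comp (f := fun p : 'rV[R]_n * 'rV[R]_n => p.1 + c *: p.2)
               (g := rfun Phi)).
        apply: cvgD; [exact: cvg_fst| apply: cvgZl_tmp; exact: cvg_snd].
      exact: differentiable_continuous (dP _ hc).
    have hc1 : U (y + e *: u) by have := HsU y u Cy Su 1; rewrite mul1r; apply; lra.
    have hc2 : U (y + (e / 2) *: u).
      by have := HsU y u Cy Su (2^-1); rewrite mulrC; apply; lra.
    have hc0 : U y.
      by have := HsU y u Cy Su 0; rewrite mul0r scale0r addr0; apply; lra.
    have c0 : {for (y, u), continuous (fun p : 'rV[R]_n * 'rV[R]_n => rfun Phi p.1)}.
      apply: (continuous_comp (f := fun p : 'rV[R]_n * 'rV[R]_n => p.1) (g := rfun Phi)).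
        exact: cvg_fst.
      exact: differentiable_continuous (dP _ hc0).
    have -> : h = (fun p => rfun Phi (p.1 + e *: p.2)) -
       (fun p => 2 * rfun Phi (p.1 + (e / 2) *: p.2)) + (fun p => rfun Phi p.1).
      by apply: funext => p.
    apply: cvgD => //; apply: cvgB; first exact: fc.
    apply: cvgMl_tmp; exact: fc.
  have [[y u] cK' Hc] := compact_EVT_min K0 cK ch.
  exists (h (y, u)); split; last by move=> y' u' Cy Su; apply: Hc; apply/mem_set.
  move: cK' => /set_mem [/= Cy Su].
  apply: hpos => //.
    apply/negP => /eqP /= u0; move: Su; rewrite /S /= u0 normr0 => /esym/eqP; by rewrite oner_eq0.
  exact: (HsU y u Cy Su).
pose k : R := n.+1%:R.
have k0 : 0 < k by rewrite /k ltr0n.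
exists (m / (e * k)), (m / e * (e + B)); split.
  by apply: divr_gt0 => //; apply: mulr_gt0.
move=> x y hx Cy.
have yU := CU y Cy.
have hy := interior_subset yU.
rewrite /bregman asboolT; last by split.
rewrite lee_fin grad_inner; last exact: dP.
set v := x - y.
set d := `|v|.
have Hn : m / (e * k) * enorm x - m / e * (e + B) <= m / e * (d - e).
  have h1 : enorm x <= k * `|x| by exact: enorm_le.
  have h2 : `|x| <= d + B.
    have -> : x = v + y by rewrite /v subrK.
    apply: (le_trans (ler_normD _ _)); rewrite lerD2l; exact: HB.
  have me : 0 <= m / e by apply: divr_ge0; lra.
  have -> : m / (e * k) = m / e / k by rewrite invfM mulrA.
  have h3 : m / e / k * enorm x <= m / e * `|x|.
    rewrite -mulrA ler_wpM2l // ler_pdivrMl //.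
  have h4 : m / e * `|x| <= m / e * (d + B) by rewrite ler_wpM2l.
  have -> : m / e * (d - e) = m / e * (d + B) - m / e * (e + B) by ring.
  by rewrite lerD2r; apply: le_trans h3 h4.
apply: le_trans Hn _.
have D1 : 'D_v (rfun Phi) y <= rfun Phi x - rfun Phi y.
  have := @dq_le R n Phi y v 1 G (diff_derivable (dP _ yU)) hy.
  by rewrite scale1r /v addrC subrK divr1 => /(_ hx ltr01).
have [hde|hde] := leP d e.
  have : m / e * (d - e) <= 0.
    apply: mulr_ge0_le0; first by apply: divr_ge0; lra.
    lra.
  lra.
have d0 : 0 < d by lra.
pose t := e / d.
have t0 : 0 < t by apply: divr_gt0.
have t1 : t < 1 by rewrite /t ltr_pdivrMr // mul1r.
pose u := d^-1 *: v.
have u1 : `|u| = 1 by rewrite /u normrZ ger0_norm ?invr_ge0; [rewrite mulVf // gt_eqF|lra].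
have E1 : y + t *: v = y + e *: u by rewrite /u scalerA.
have E2 : y + (t / 2) *: v = y + (e / 2) *: u.
  by rewrite /u scalerA /t mulrAC.
have Hmu := Hm y u Cy u1; rewrite /h /= in Hmu.
have U2 : U (y + (e / 2) *: u).
  apply: He => //; rewrite normrZ u1 mulr1 ger0_norm; last lra; lra.
have [_ H1] := @conv_fin R n Phi x y t pP cP hx hy (introT andP (conj t0 t1)).
have E0 : t *: x + (1 - t) *: y = y + t *: v.
  by rewrite /v scalerBr scalerBl scale1r addrCA.
rewrite E0 E1 in H1.
have H2 := @dq_le R n Phi y v (t / 2) G (diff_derivable (dP _ yU)) hy.
rewrite E2 in H2.
have := H2 (interior_subset U2) ltac:(lra).
set A := rfun Phi (y + e *: u) in H1 Hmu *.
set Bm := rfun Phi (y + (e / 2) *: u) in Hmu *.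
set F0 := rfun Phi y in H1 Hmu *.
set Fx := rfun Phi x in H1 *.
set D := 'D_v (rfun Phi) y.
move=> H2'.
have H3 : t * D <= 2 * (Bm - F0).
  move: H2'; rewrite ler_pdivlMr; last lra.
  move=> H; nra.
have Tm : t * (m / e * (d - e)) = m - m * t.
  rewrite /t; field; apply/andP; split; apply: lt0r_neq0 => //.
suff : t * (m / e * (d - e)) <= t * (Fx - F0 - D).
  by rewrite ler_pM2l.
rewrite Tm.
have : 0 <= m * t by apply: mulr_ge0; lra.
nra.
Unshelve. all: by end_near.
Qed.
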